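(* Let $A_R$ be a calibrated $R$-superalgebra with basis $B^A$ and let $e\in\mathfrak a_R$ be an idempotent such that $be=b$ or $be=0$ for every $b\in B^A$. Then $\tilde\Gamma^d(\mathrm{Col}_n(A_Re))\simeq T^A(n,d)_R\,\eta^{e^d}_{1^d,1^d}$ (even isomorphism of left $T^A(n,d)_R$-supermodules), where $\eta^{e^d}_{1^d,1^d}=(\xi^e_{1,1})^{\otimes d}$.
   Context: Let $R$ be a principal ideal domain of characteristic $0$. A calibrated $R$-supermodule is a free finite-rank $R$-supermodule $V$ with a decomposition $V_{\bar0}=V_{\mathfrak a}\oplus V_{\mathfrak c}$ into free submodules; with bases $B_{\mathfrak a},B_{\mathfrak c},B_{\bar1}$ and a total order on their union $B$, $\mathfrak S_d$ acts on $V^{\otimes d}$ by $(v_1\otimes\cdots\otimes v_d)^\sigma=(-1)^{\langle\sigma;\mathbf v\rangle}v_{\sigma1}\otimes\cdots\otimes v_{\sigma d}$ ($\langle\sigma;\mathbf v\rangle$ = number of $k<l$ with $\sigma^{-1}k>\sigma^{-1}l$, $v_k,v_l$ odd); for a $d$-tuple $\mathbf b$ of basis elements in which only even ones repeat, $y_{\mathbf b}=\prod_{b\in B_{\mathfrak c}}\#\{k:b_k=b\}!\cdot\sum_{\mathbf b'}(-1)^{\langle\mathbf b\rangle+\langle\mathbf b'\rangle}b'_1\otimes\cdots\otimes b'_d$ (sum over distinct place-permutations $\mathbf b'$; $\langle\mathbf b\rangle$ = number of $k<l$ with $b_k,b_l$ odd, $b_k>b_l$), and $\tilde\Gamma^dV=\mathrm{span}_R\{y_{\mathbf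 b}\}$. A calibrated $R$-superalgebra is a free finite-rank $R$-superalgebra $A_R$ with $A_{R,\bar0}=\mathfrak a_R\oplus\mathfrak c_R$ (free), $\mathfrak a_R$ a unital subalgebra, with bases $B^A_{\mathfrak a},B^A_{\mathfrak c},B^A_{\bar1}$, $B^A$ their union. $M_n(A_R)$ is the matrix superalgebra with basis $\xi^b_{r,s}$ ($b\in B^A$ in position $(r,s)$), calibrated by $M_n(\mathfrak a_R)$, $M_n(\mathfrak c_R)$; $T^A(n,d)_R=\tilde\Gamma^dM_n(A_R)$, a unital subsuperalgebra of $M_n(A_R)^{\otimes d}$ (Koszul sign product). For a calibrated $A_R$-supermodule $V$ (i.e. $\mathfrak a_RV_{\mathfrak a}\subseteq V_{\mathfrak a}$), $\mathrm{Col}_n(V)=V^{\oplus n}$ (column vectors) is a left $M_n(A_R)$-supermodule, calibrated by $\mathrm{Col}_n(V_{\mathfrak a})$, $\mathrm{Col}_n(V_{\mathfrak c})$, and $\tilde\Gamma^d\mathrm{Col}_n(V)$ is a left $T^A(n,d)_R$-supermodule via the natural (Koszul-signed) action of $M_n(A_R)^{\otimes d}$ on $\mathrm{Col}_n(V)^{\otimes d}$. Here $A_Re$ is calibrated with $(A_Re)_{\mathfrak a}=\mathfrak a_Re$, $(A_Re)_{\mathfrak c}=\mathfrak c_Re$. *)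

(* Defs.v *)
(* Concrete coordinate model of free calibrated supermodules:
   a free module with finite basis T is {ffun T -> R}; its d-th tensor power
   is {ffun d.-tuple T -> R} (coordinates on the tensor basis). *)
From HB Require Import structures.
From mathcomp Require Import all_boot all_algebra.
Set Implicit Arguments.
Unset Strict Implicit.
Unset Printing Implicit Defensive.
Import GRing.Theory.
Local Open Scope ring_scope.

(* kind of a basis element: in B_a, in B_c, or odd (B_1) *)
Inductive kind := Ka | Kc | Ko.
Definition kodd k := if k is Ko then true else false.
Definition kA k := if k is Ka then true else false.
Definition kC k := if k is Kc then true else false.

Definition strict_total (T : finType) (lt : rel T) :=
  [/\ irreflexive lt, transitive lt & forall x y, x != y -> lt x y || lt y x].

Definition char0 (R : idomainType) := forall m : nat, (m%:R : R) = 0 -> m = 0%N.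

Definition is_ideal (R : idomainType) (S : R -> Prop) :=
  [/\ S 0, (forall x y, S x -> S y -> S (x + y)) & (forall a x, S x -> S (a * x))].
Definition PID (R : idomainType) :=
  forall S : R -> Prop, is_ideal S -> exists g : R, forall x, S x <-> exists a, x = a * g.

Section Tensor.
Variables (R : idomainType) (T : finType) (od isc : pred T) (lt : rel T) (d : nat).

Definition oinv (t : d.-tuple T) : nat :=
  #|[pred kl : 'I_d * 'I_d | [&& (kl.1 < kl.2)%N, od (tnth t kl.1),
        od (tnth t kl.2) & lt (tnth t kl.2) (tnth t kl.1)]]|.

Definition cfact (t : d.-tuple T) : nat := (\prod_(c : T | isc c) (count_mem c t)`!)%N.

(* y_b, as a coordinate vector on the tensor basis; the distinct place-
   permutations b' of b are exactly the tuples t with perm_eq t b *)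
Definition ytens (b : d.-tuple T) : {ffun d.-tuple T -> R} :=
  [ffun t : d.-tuple T => if perm_eq t b then (-1) ^+ (oinv b + oinv t) * (cfact b)%:R else 0].

Definition admissible (b : d.-tuple T) := uniq (filter od b).

(* v lies in the R-span of the y_b, b ranging over admissible tuples of basis
   elements satisfying P (P selects the basis of the module: here either all of
   T, or a subset of T spanning a calibrated submodule) *)
Definition inGamma (P : pred T) (v : {ffun d.-tuple T -> R}) :=
  exists c : {ffun d.-tuple T -> R},
    v = [ffun t : d.-tuple T => \sum_(b : d.-tuple T | admissible b && all P b) c b * ytens b t].

Definition tpar (t : d.-tuple T) : bool := odd (count od t).
Definition homog (p : bool) (v : {ffun d.-tuple T -> R}) :=
  forall t, v t != 0 -> tpar t = p.
End Tensor.

(* Koszul sign for (x_1 (x) .. (x) x_d)(y_1 (x) .. (x) y_d):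
   (-1)^{sum_{l<k} |x_k| |y_l|} *)
Definition ksgn (R : idomainType) (T1 T2 : finType) (o1 : pred T1) (o2 : pred T2) (d : nat)
  (u : d.-tuple T1) (w : d.-tuple T2) : R :=
  (-1) ^+ #|[pred kl : 'I_d * 'I_d | [&& (kl.1 < kl.2)%N, o1 (tnth u kl.2) & o2 (tnth w kl.1)]]|.

(* Koszul-signed action of T1^{(x)d} on T2^{(x)d}, given the structure constants
   c a b z = coefficient of basis element z in a . b *)
Definition tact (R : idomainType) (T1 T2 : finType) (o1 : pred T1) (o2 : pred T2)
  (c : T1 -> T2 -> T2 -> R) (d : nat)
  (x : {ffun d.-tuple T1 -> R}) (v : {ffun d.-tuple T2 -> R}) : {ffun d.-tuple T2 -> R} :=
  [ffun z : d.-tuple T2 => \sum_(u : d.-tuple T1) \sum_(w : d.-tuple T2)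
      x u * v w * ksgn R o1 o2 u w * \prod_(k < d) c (tnth u k) (tnth w k) (tnth z k)].

Section Superalgebra.
Variables (R : idomainType) (I : finType) (kd : I -> kind) (mu : I -> I -> I -> R).

(* the algebra A_R with basis I; b_i b_j = sum_k mu i j k b_k *)
Definition smulA (x y : {ffun I -> R}) : {ffun I -> R} :=
  [ffun k : I => \sum_i \sum_j x i * y j * mu i j k].
Definition supp_in (P : pred I) (x : {ffun I -> R}) := forall i, x i != 0 -> P i.
Definition basisv (b : I) : {ffun I -> R} := [ffun k : I => (k == b)%:R].
Definition bodd (i : I) := kodd (kd i).
Definition inA (i : I) := kA (kd i).

(* associative unital superalgebra, homogeneous basis, a_R unital subalgebra *)
Definition calibrated_superalgebra (one : {ffun I -> R}) :=
  [/\ (forall x y z, smulA (smulA x y) z = smulA x (smulA y z)),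
      (forall x, smulA one x = x /\ smulA x one = x),
      (forall i j k, mu i j k != 0 -> bodd k = bodd i (+) bodd j),
      supp_in inA one &
      (forall i j k, inA i -> inA j -> mu i j k != 0 -> inA k)].

Variable n : nat.
(* basis xi^b_{r,s} of M_n(A_R) indexed by ((b, r), s) *)
Definition Modd (x : I * 'I_n * 'I_n) := bodd x.1.1.
Definition MC (x : I * 'I_n * 'I_n) := kC (kd x.1.1).
Definition muM (x y z : I * 'I_n * 'I_n) : R :=
  if [&& x.2 == y.1.2, z.1.2 == x.1.2 & z.2 == y.2] then mu x.1.1 y.1.1 z.1.1 else 0.
(* basis of Col_n(A_R): (b, r) = b in row r; action of M_n(A_R) *)
Definition Codd (v : I * 'I_n) := bodd v.1.
Definition CC (v : I * 'I_n) := kC (kd v.1).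
Definition actC (x : I * 'I_n * 'I_n) (v z : I * 'I_n) : R :=
  if (x.2 == v.2) && (z.2 == x.1.2) then mu x.1.1 v.1 z.1 else 0.
(* basis of Col_n(A_R e): those (b, r) with b e = b *)
Definition Pe (e : {ffun I -> R}) (v : I * 'I_n) := smulA (basisv v.1) e == basisv v.1.

Variable d : nat.
(* T^A(n,d)_R = Gamma~^d M_n(A_R) inside M_n(A_R)^{(x)d} *)
Definition inTA (ltM : rel (I * 'I_n * 'I_n)) := @inGamma R _ Modd MC ltM d predT.
Definition mulT := tact Modd Modd muM (d := d).
Definition actT := tact Modd Codd actC (d := d).
(* Gamma~^d Col_n(A_R e) inside Col_n(A_R)^{(x)d} *)
Definition inGCol (ltC : rel (I * 'I_n)) (e : {ffun I -> R}) := @inGamma R _ Codd CC ltC d (Pe e).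
(* eta^{e^d}_{1^d,1^d} = (xi^e_{1,1})^{(x)d}, i1 the first row/column index *)
Definition etaT (e : {ffun I -> R}) (i1 : 'I_n) : {ffun d.-tuple (I * 'I_n * 'I_n) -> R} :=
  [ffun z => \prod_(k < d) (if ((tnth z k).1.2 == i1) && ((tnth z k).2 == i1)
                            then e (tnth z k).1.1 else 0)].
Definition inTeta ltM e i1 (w : {ffun d.-tuple (I * 'I_n * 'I_n) -> R}) :=
  exists2 x, inTA ltM x & w = mulT x (etaT e i1).
End Superalgebra.

(* Main.v *)
Require Import Defs.
From HB Require Import structures.
From mathcomp Require Import all_boot all_algebra fingroup perm.
Set Implicit Arguments.
Unset Strict Implicit.
Unset Printing Implicit Defensive.
Import GRing.Theory.
Local Open Scope ring_scope.

Lemma card_sum (T : finType) (P : pred T) : #|P| = (\sum_(i : T) (P i : nat))%N.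
Proof.
rewrite -sum1_card big_mkcond /=; apply: eq_bigr => i _.
by rewrite unfold_in; case: (P i).
Qed.

Lemma perm_pairs (T : finType) d (Q : rel T) (t b : d.-tuple T) :
  (forall a, Q a a = false) -> (forall a c, Q a c = Q c a) -> perm_eq t b ->
  #|[pred kl : 'I_d * 'I_d | (kl.1 < kl.2)%N && Q (tnth t kl.1) (tnth t kl.2)]| =
  #|[pred kl : 'I_d * 'I_d | (kl.1 < kl.2)%N && Q (tnth b kl.1) (tnth b kl.2)]|.
Proof.
move=> Qirr Qsym pe.
have H2 : forall s : d.-tuple T,
  (2 * #|[pred kl : 'I_d * 'I_d | (kl.1 < kl.2)%N && Q (tnth s kl.1) (tnth s kl.2)]|
   = \sum_(kl : 'I_d * 'I_d) (Q (tnth s kl.1) (tnth s kl.2) : nat))%N.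
  move=> s; rewrite card_sum mul2n -addnn.
  rewrite [X in (_ + X)%N](reindex_inj (h := fun kl : 'I_d * 'I_d => (kl.2, kl.1))); last first.
    by move=> [x y] [x' y'] /= [-> ->].
  rewrite -big_split /=; apply: eq_bigr => [[k l]] _ /=.
  rewrite (Qsym (tnth s l)).
  case: (ltngtP k l) => h //=; first by rewrite addn0.
  have -> : k = l by apply: val_inj.
  by rewrite Qirr.
have HN : (\sum_(kl : 'I_d * 'I_d) (Q (tnth t kl.1) (tnth t kl.2) : nat) =
           \sum_(kl : 'I_d * 'I_d) (Q (tnth b kl.1) (tnth b kl.2) : nat))%N.
  case/tuple_permP: pe => p Ep.
  have Et : t = [tuple tnth b (p i) | i < d] by apply: val_inj.
  rewrite Et [in RHS](reindex_inj (h := fun kl : 'I_d * 'I_d => (p kl.1, p kl.2))); last first.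
    by move=> [x y] [x' y'] /= [/perm_inj -> /perm_inj ->].
  by apply: eq_bigr => kl _; rewrite !tnth_mktuple.
apply/eqP; rewrite -(eqn_pmul2l (isT : (0 < 2)%N)); apply/eqP.
by rewrite !H2.
Qed.

Section Ord.
Variables (T : finType) (od : pred T) (lt1 lt2 : rel T).
Hypotheses (h1 : strict_total lt1) (h2 : strict_total lt2).

Lemma st_neg (lt : rel T) : strict_total lt -> forall a c, a != c -> lt a c = ~~ lt c a.
Proof.
case=> irr tr tot a c ne.
have := tot a c ne; case hac: (lt a c) => /=; last by move=> ->.
move=> _; apply/esym/negP => hca.
by have := tr c a a hac hca; rewrite irr.
Qed.

Definition Qo : rel T := fun a c => od a && od c && (lt1 c a (+) lt2 c a).

Lemma Qo_irr a : Qo a a = false.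
Proof. by case: h1 => irr1 _ _; case: h2 => irr2 _ _; rewrite /Qo irr1 irr2 andbF. Qed.

Lemma Qo_sym a c : Qo a c = Qo c a.
Proof.
have [-> // | ne] := eqVneq a c.
rewrite /Qo (st_neg h1 ne) (st_neg h2 ne).
by case: (od a); case: (od c); case: (lt1 c a); case: (lt2 c a).
Qed.

Lemma oinv_sum d (t : d.-tuple T) :
  (oinv od lt1 t + oinv od lt2 t =
   #|[pred kl : 'I_d * 'I_d | (kl.1 < kl.2)%N && Qo (tnth t kl.1) (tnth t kl.2)]| +
   2 * \sum_(kl : 'I_d * 'I_d) ([&& (kl.1 < kl.2)%N, od (tnth t kl.1), od (tnth t kl.2),
        lt1 (tnth t kl.2) (tnth t kl.1) & lt2 (tnth t kl.2) (tnth t kl.1)] : nat))%N.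
Proof.
rewrite /oinv !card_sum -big_split big_distrr -big_split /=.
apply: eq_bigr => kl _ /=; rewrite /Qo.
move: (kl.1 < kl.2)%N (od (tnth t kl.1)) (od (tnth t kl.2))
   (lt1 (tnth t kl.2) (tnth t kl.1)) (lt2 (tnth t kl.2) (tnth t kl.1)).
by do 5! case.
Qed.

Lemma oinv_sign (R : idomainType) d (t b : d.-tuple T) : perm_eq t b ->
  (-1) ^+ (oinv od lt1 b + oinv od lt1 t) = (-1) ^+ (oinv od lt2 b + oinv od lt2 t) :> R.
Proof.
move=> pe.
have H : odd (oinv od lt1 t + oinv od lt2 t) = odd (oinv od lt1 b + oinv od lt2 b).
  rewrite !oinv_sum !oddD /= !addbF !addbb !addbF.
  by rewrite (perm_pairs Qo_irr Qo_sym pe).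
rewrite -signr_odd -[in RHS]signr_odd; congr (_ ^+ (nat_of_bool _)).
move: H; rewrite !oddD.
by case: (odd (oinv od lt1 t)); case: (odd (oinv od lt2 t));
   case: (odd (oinv od lt1 b)); case: (odd (oinv od lt2 b)).
Qed.

Lemma ytens_indep (R : idomainType) (isc : pred T) d (b : d.-tuple T) :
  ytens R od isc lt1 b = ytens R od isc lt2 b.
Proof.
apply/ffunP => t; rewrite !ffunE; case: ifP => // pe.
by rewrite (oinv_sign R pe).
Qed.
End Ord.

Lemma ytens_supp (R : idomainType) (T : finType) od isc lt d (b t : d.-tuple T) :
  ytens R od isc lt b t != 0 -> perm_eq t b.
Proof. by rewrite ffunE; case: ifP => //; rewrite eqxx. Qed.

Lemma sum_tuple_prod (R : idomainType) (T : finType) d (G : 'I_d -> T -> R) :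
  \sum_(w : d.-tuple T) \prod_(k < d) G k (tnth w k) = \prod_(k < d) \sum_(x : T) G k x.
Proof.
rewrite bigA_distr_bigA /=.
rewrite (reindex (fun f : {ffun 'I_d -> T} => [tuple f k | k < d])) /=; last first.
  exists (fun w : d.-tuple T => [ffun k => tnth w k]) => [f _ | w _].
    by apply/ffunP => k; rewrite ffunE tnth_mktuple.
  by apply: eq_from_tnth => k; rewrite tnth_mktuple ffunE.
by apply: eq_bigr => f _; apply: eq_bigr => k _; rewrite tnth_mktuple.
Qed.

Lemma prod_nat_bool (R : idomainType) d (P : 'I_d -> bool) :
  \prod_(k < d) (P k)%:R = ([forall k, P k])%:R :> R.
Proof.
case: forallP => H; first by rewrite big1 // => k _; rewrite H.
have [k Pk] : exists k, ~~ P k.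
  by apply/existsP; rewrite -negb_forall; apply/negP => /forallP.
by rewrite (bigD1 k) //= (negbTE Pk) mul0r.
Qed.

Section Spec.
Variables (R : idomainType) (I : finType) (kd : I -> kind) (mu : I -> I -> I -> R)
  (e : {ffun I -> R}) (n : nat) (i1 : 'I_n) (d : nat).

Local Notation TC := (I * 'I_n)%type.
Local Notation TM := (I * 'I_n * 'I_n)%type.

Definition lift1 (p : TC) : TM := (p, i1).
Definition liftT (t : d.-tuple TC) : d.-tuple TM := [tuple of map lift1 t].
Definition fstT (z : d.-tuple TM) : d.-tuple TC := [tuple of map fst z].
Definition col1 (z : d.-tuple TM) := all (fun p : TM => p.2 == i1) z.
Definition Fmap (v : {ffun d.-tuple TC -> R}) : {ffun d.-tuple TM -> R} :=
  [ffun z => if col1 z then v (fstT z) else 0].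

Lemma lift1_inj : injective lift1.
Proof. by move=> x y [->]. Qed.

Lemma liftTK t : fstT (liftT t) = t.
Proof. by apply: val_inj; rewrite /= -map_comp map_id. Qed.

Lemma fstTK z : col1 z -> liftT (fstT z) = z.
Proof.
move=> /all_tnthP h; apply: eq_from_tnth => k.
rewrite !tnth_map; have := h k; case: (tnth z k) => [p s] /= /eqP ->.
by [].
Qed.

Lemma col1_lift t : col1 (liftT t).
Proof. by apply/all_tnthP => k; rewrite tnth_map. Qed.

Lemma sum_col1 (F : d.-tuple TM -> R) :
  (forall z, ~~ col1 z -> F z = 0) ->
  \sum_(z : d.-tuple TM) F z = \sum_(t : d.-tuple TC) F (liftT t).
Proof.
move=> F0; rewrite (bigID col1) /= [X in _ + X]big1 ?addr0; last by move=> z /F0.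
rewrite (reindex_onto liftT fstT); last by move=> z /fstTK.
by apply: eq_bigl => t; rewrite col1_lift liftTK eqxx.
Qed.

Lemma equiv x v : Fmap (actT kd mu x v) = mulT kd mu x (Fmap v).
Proof.
apply/ffunP => z; rewrite /mulT /actT /tact !ffunE.
under [RHS]eq_bigr => u _.
  rewrite (sum_col1 (F := fun w => x u * Fmap v w * _ * _)); last first.
    by move=> w /negbTE h; rewrite ffunE h mulr0 mul0r mul0r.
  under eq_bigr => w _ do rewrite ffunE col1_lift liftTK.
  over.
case cz: (col1 z); last first.
  apply/esym/big1 => u _; apply: big1 => w _.
  have [k hk] : exists k, (tnth z k).2 != i1.
    have : ~~ [forall k, (tnth z k).2 == i1].
      by apply/forallP => h; move: cz; rewrite /col1 (introT all_tnthP h).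
    by rewrite negb_forall => /existsP.
  by rewrite (bigD1 k) //= /muM tnth_map /= (negbTE hk) !andbF mul0r mulr0.
apply: eq_bigr => u _; apply: eq_bigr => w _.
congr (_ * _ * _); last first.
  apply: eq_bigr => k _; rewrite /muM /actC !tnth_map /=.
  by move/all_tnthP: cz => /(_ k) ->; rewrite andbT.
rewrite /ksgn; congr (_ ^+ _); apply: eq_card => kl; rewrite !inE tnth_map.
by [].
Qed.
End Spec.

Section Spec2.
Variables (R : idomainType) (I : finType) (kd : I -> kind) (mu : I -> I -> I -> R)
  (e : {ffun I -> R}) (n : nat) (i1 : 'I_n) (d : nat).
Hypotheses (he_a : supp_in (inA kd) e)
  (hbe : forall b : I, smulA mu (basisv R b) e = basisv R b \/ smulA mu (basisv R b) e = 0).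

Local Notation TC := (I * 'I_n)%type.
Local Notation TM := (I * 'I_n * 'I_n)%type.

Definition S1 (p : TM) := (p.2 == i1) && Pe mu e p.1.
Definition Sg (z : d.-tuple TM) := all S1 z.
Definition eta1 (t : TM) := if (t.1.2 == i1) && (t.2 == i1) then e t.1.1 else 0.

Lemma smulA_basis (b k : I) : smulA mu (basisv R b) e k = \sum_c e c * mu b c k.
Proof.
rewrite ffunE (bigD1 b) //= [X in _ + X]big1 ?addr0; last first.
  move=> i /negbTE ib; apply: big1 => j _; rewrite ffunE ib mul0r mul0r //.
by apply: eq_bigr => j _; rewrite ffunE eqxx mul1r.
Qed.

Lemma basisv_neq0 (b : I) : basisv R b != 0.
Proof. by apply/eqP => /ffunP /(_ b); rewrite !ffunE eqxx => /eqP; rewrite oner_eq0. Qed.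

Lemma inner1 (p q : TM) :
  \sum_(t : TM) eta1 t * muM mu p t q = ((p == q) && S1 q)%:R.
Proof.
transitivity (\sum_(a : TC) \sum_(s : 'I_n) eta1 (a, s) * muM mu p (a, s) q).
  by rewrite pair_bigA; apply: eq_bigr => [[a s]].
transitivity (\sum_(a : TC) eta1 (a, i1) * muM mu p (a, i1) q).
  apply: eq_bigr => a _; rewrite (bigD1 i1) //= big1 ?addr0 // => s /negbTE hs.
  by rewrite /eta1 /= hs andbF mul0r.
transitivity (\sum_(c : I) \sum_(r : 'I_n) eta1 ((c, r), i1) * muM mu p ((c, r), i1) q).
  by rewrite pair_bigA; apply: eq_bigr => [[a s]].
transitivity (\sum_(c : I) e c * muM mu p ((c, i1), i1) q).
  apply: eq_bigr => c _; rewrite (bigD1 i1) //= big1 ?addr0; last first.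
    by move=> s /negbTE hs; rewrite /eta1 /= hs mul0r.
  by rewrite /eta1 /= eqxx.
case: p => [[b r] s]; case: q => [[b' r'] s'].
rewrite /muM /=.
transitivity (if [&& s == i1, r' == r & s' == i1] then smulA mu (basisv R b) e b' else 0).
  rewrite smulA_basis; case: ifP => _; last by rewrite big1 // => c _; rewrite mulr0.
  by [].
rewrite /S1 /Pe /= !xpair_eqE.
case: (hbe b) => hb; last first.
  rewrite hb ffunE if_same.
  have [<-|nb] := eqVneq b b'; last by rewrite andFb.
  by rewrite hb [0 == _]eq_sym (negbTE (basisv_neq0 b)) !andbF.
rewrite hb ffunE.
have [<-|nb] := eqVneq b b'; last by rewrite /= mulr0n if_same.
rewrite hb !eqxx /=.
have [->|hs'] := eqVneq s' i1; last by rewrite !andbF.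
rewrite !andbT [r' == r]eq_sym.
by case: (s == i1); case: (r == r').
Qed.

Lemma mulT_eta x :
  mulT kd mu x (etaT d e i1) = [ffun z => if Sg z then x z else 0].
Proof.
apply/ffunP => z; rewrite /mulT /tact !ffunE.
have inner : forall u : d.-tuple TM,
  \sum_(w : d.-tuple TM) x u * etaT d e i1 w * ksgn R (Modd kd (n:=n)) (Modd kd (n:=n)) u w *
     \prod_(k < d) muM mu (tnth u k) (tnth w k) (tnth z k)
  = x u * \prod_(k < d) ((tnth u k == tnth z k) && S1 (tnth z k))%:R.
  move=> u.
  transitivity (x u * \sum_(w : d.-tuple TM) \prod_(k < d)
                   (eta1 (tnth w k) * muM mu (tnth u k) (tnth w k) (tnth z k))).
    rewrite big_distrr /=; apply: eq_bigr => w _.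
    rewrite -mulrA -mulrA; congr (_ * _).
    rewrite big_split /= ffunE.
    have [->|nz] := eqVneq (\prod_(k < d) eta1 (tnth w k)) 0.
      by rewrite !mul0r.
    have hk : forall k, eta1 (tnth w k) != 0.
      move=> k; apply: contraNneq nz => h; apply/prodf_eq0; exists k => //.
      by rewrite h.
    rewrite /ksgn.
    have -> : #|[pred kl : 'I_d * 'I_d | [&& (kl.1 < kl.2)%N, Modd kd (tnth u kl.2)
                  & Modd kd (tnth w kl.1)]]| = 0%N.
      apply: eq_card0 => kl; rewrite !inE.
      have := hk kl.1; rewrite /eta1; case: ifP => _; last by rewrite eqxx.
      move/he_a; rewrite /inA /Modd /bodd.
      by case: (kd (tnth w kl.1).1.1); rewrite ?andbF.
    by rewrite expr0 mul1r.
  by rewrite (sum_tuple_prod (fun k t => eta1 t * muM mu (tnth u k) t (tnth z k))); congr (_ * _); apply: eq_bigr => k _; rewrite inner1.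
rewrite (eq_bigr _ (fun u _ => inner u)).
rewrite (bigD1 z) //= [X in _ + X]big1 ?addr0; last first.
  move=> u uz; rewrite (@prod_nat_bool R d (fun k => (tnth u k == tnth z k) && S1 (tnth z k))).
  case: forallP => h; last by rewrite mulr0.
  by case/eqP: uz; apply: eq_from_tnth => k; have /andP [/eqP] := h k.
rewrite (@prod_nat_bool R d (fun k => (tnth z k == tnth z k) && S1 (tnth z k))).
case: ifP => hS.
  rewrite (_ : [forall k, _] = true) ?mulr1 //; apply/forallP => k.
  by rewrite eqxx /=; move/all_tnthP: hS.
rewrite (_ : [forall k, _] = false) ?mulr0 //; apply/negbTE/forallP => h.
by move: hS; rewrite /Sg; move/negbT/negP; apply; apply/all_tnthP => k; have /andP [] := h k.
Qed.
End Spec2.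

Lemma ytens_zero (R : idomainType) (T : finType) od isc lt d (P : pred T) (b t : d.-tuple T) :
  all P b -> ~~ all P t -> ytens R od isc lt b t = 0.
Proof.
move=> hb ht; apply/eqP; apply: contraNT ht => /ytens_supp pe.
by rewrite (perm_all _ pe).
Qed.

Lemma ytens_zero' (R : idomainType) (T : finType) od isc lt d (P : pred T) (b t : d.-tuple T) :
  ~~ all P b -> all P t -> ytens R od isc lt b t = 0.
Proof.
move=> hb ht; apply/eqP; apply: contraNT hb => /ytens_supp pe.
by rewrite -(perm_all _ pe).
Qed.

Section Spec3.
Variables (R : idomainType) (I : finType) (kd : I -> kind) (mu : I -> I -> I -> R)
  (e : {ffun I -> R}) (n : nat) (i1 : 'I_n) (d : nat)
  (ltM : rel (I * 'I_n * 'I_n)) (ltC : rel (I * 'I_n)).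
Hypotheses (hltM : strict_total ltM) (hltC : strict_total ltC).

Local Notation TC := (I * 'I_n)%type.
Local Notation TM := (I * 'I_n * 'I_n)%type.

Definition ltCp : rel TC := fun a c => ltM (lift1 i1 a) (lift1 i1 c).

Lemma ltCp_st : strict_total ltCp.
Proof.
case: hltM => irr tr tot; split.
- by move=> a; rewrite /ltCp irr.
- by move=> a b c; rewrite /ltCp; apply: tr.
- move=> a c ne; rewrite /ltCp; apply: tot.
  by apply: contra ne => /eqP /lift1_inj ->.
Qed.

Lemma adm_lift (b : d.-tuple TC) :
  admissible (Modd kd (n:=n)) (liftT i1 b) = admissible (Codd kd (n:=n)) b.
Proof.
rewrite /admissible /= filter_map map_inj_uniq; last exact: lift1_inj.
by [].
Qed.

Lemma oinv_lift (b : d.-tuple TC) :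
  oinv (Modd kd (n:=n)) ltM (liftT i1 b) = oinv (Codd kd (n:=n)) ltCp b.
Proof. by apply: eq_card => kl; rewrite !inE !tnth_map. Qed.

Lemma cfact_lift (b : d.-tuple TC) :
  cfact (MC kd (n:=n)) (liftT i1 b) = cfact (CC kd (n:=n)) b.
Proof.
rewrite /cfact (bigID (fun c : TM => c.2 == i1)) /=.
rewrite [X in (_ * X)%N]big1 ?muln1; last first.
  move=> c /andP [_ hc]; rewrite /= count_map.
  rewrite (eq_count (a2 := pred0)) ?count_pred0 //.
  move=> x /=; apply/negbTE; apply: contra hc => /eqP <-; by [].
rewrite (reindex_onto (lift1 i1) fst); last first.
  by move=> [a s] /andP [_ /eqP /= ->].
apply: eq_big => a; first by rewrite /lift1 /= !eqxx !andbT.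
move=> _; rewrite /= count_map; congr (_ `!).
by apply: eq_count => x /=; rewrite (inj_eq (@lift1_inj _ _ i1)).
Qed.

Lemma ytens_lift (b t : d.-tuple TC) :
  ytens R (Modd kd (n:=n)) (MC kd (n:=n)) ltM (liftT i1 b) (liftT i1 t)
  = ytens R (Codd kd (n:=n)) (CC kd (n:=n)) ltC b t.
Proof.
rewrite -(ytens_indep (Codd kd (n:=n)) ltCp_st hltC) !ffunE.
have -> : perm_eq (liftT i1 t) (liftT i1 b) = perm_eq t b.
  apply/idP/idP => [/(perm_map_inj (@lift1_inj _ _ i1)) //|].
  exact: perm_map.
by rewrite !oinv_lift cfact_lift.
Qed.

Lemma key (g : d.-tuple TC -> R) (t : d.-tuple TC) :
  \sum_(b' : d.-tuple TM | admissible (Modd kd (n:=n)) b' && all predT b')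
     (if col1 i1 b' && all (Pe mu e) (fstT b') then g (fstT b') else 0)
       * ytens R (Modd kd (n:=n)) (MC kd (n:=n)) ltM b' (liftT i1 t)
  = \sum_(b : d.-tuple TC | admissible (Codd kd (n:=n)) b && all (Pe mu e) b)
       g b * ytens R (Codd kd (n:=n)) (CC kd (n:=n)) ltC b t.
Proof.
transitivity (\sum_(b' : d.-tuple TM | (admissible (Modd kd (n:=n)) b' && all predT b')
                 && (col1 i1 b' && all (Pe mu e) (fstT b')))
     g (fstT b') * ytens R (Modd kd (n:=n)) (MC kd (n:=n)) ltM b' (liftT i1 t)).
  rewrite [RHS]big_mkcondr /=; apply: eq_bigr => b' _.
  by case: ifP => _; rewrite ?mul0r.
rewrite (reindex_onto (@liftT _ _ i1 d) (@fstT _ _ d)); last first.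
  by move=> b' /andP [_ /andP [/fstTK]].
apply: eq_big => b.
  by rewrite adm_lift liftTK col1_lift all_predT eqxx /= !andbT.
by move=> _; rewrite liftTK ytens_lift.
Qed.
End Spec3.

Lemma Sg_col1 (R : idomainType) (I : finType) (mu : I -> I -> I -> R) (e : {ffun I -> R})
  n (i1 : 'I_n) d (z : d.-tuple (I * 'I_n * 'I_n)) :
  Sg mu e i1 z = col1 i1 z && all (Pe mu e) (fstT z).
Proof. by rewrite /Sg /col1 /= all_map -all_predI; apply: eq_all. Qed.

Unset Implicit Arguments.
Set Strict Implicit.

Theorem lemma4p12 (R : idomainType) (hR0 : char0 R) (hPID : PID R)
  (I : finType) (kd : I -> kind) (mu : I -> I -> I -> R) (one : {ffun I -> R})
  (hA : calibrated_superalgebra kd mu one)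
  (e : {ffun I -> R}) (he_a : supp_in (inA kd) e) (he : smulA mu e e = e)
  (hbe : forall b : I, smulA mu (basisv R b) e = basisv R b \/ smulA mu (basisv R b) e = 0)
  (n : nat) (hn : (0 < n)%N) (d : nat)
  (ltM : rel (I * 'I_n * 'I_n)) (hltM : strict_total ltM)
  (ltC : rel (I * 'I_n)) (hltC : strict_total ltC) :
  exists f : {ffun d.-tuple (I * 'I_n) -> R} -> {ffun d.-tuple (I * 'I_n * 'I_n) -> R},
    [/\ (* R-linear on Gamma~^d Col_n(A_R e) *)
        (forall (a : R) u v, inGCol kd mu ltC e u -> inGCol kd mu ltC e v ->
           f [ffun t : d.-tuple (I * 'I_n) => a * u t + v t] = [ffun t : d.-tuple (I * 'I_n * 'I_n) => a * f u t + f v t]),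
        (* maps into T^A(n,d)_R eta *)
        (forall v, inGCol kd mu ltC e v -> inTeta kd mu ltM e (Ordinal hn) (f v)),
        (* injective *)
        (forall u v, inGCol kd mu ltC e u -> inGCol kd mu ltC e v -> f u = f v -> u = v),
        (* surjective *)
        (forall w, inTeta kd mu ltM e (Ordinal hn) w -> exists2 v, inGCol kd mu ltC e v & f v = w) &
        (
        (* T^A(n,d)_R-equivariant *)
        (forall x v, inTA kd ltM x -> inGCol kd mu ltC e v ->
           f (actT kd mu x v) = mulT kd mu x (f v)) /\
        (* even *)
        (forall (p : bool) v, inGCol kd mu ltC e v -> homog (Codd kd (n:=n)) p v ->
           homog (Modd kd (n:=n)) p (f v)))].
Proof.
set i1 := Ordinal hn.
exists (@Fmap R I n i1 d); split.
- move=> a u v _ _; apply/ffunP => z; rewrite !ffunE.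
  by case: ifP => _; rewrite ?ffunE // mulr0 addr0.
- move=> v [c ->].
  pose c' := [ffun b' : d.-tuple (I * 'I_n * 'I_n) =>
     if col1 i1 b' && all (Pe mu e) (fstT b') then c (fstT b') else 0].
  exists [ffun t : d.-tuple (I * 'I_n * 'I_n) =>
     \sum_(b' | admissible (Modd kd (n:=n)) b' && all predT b')
        c' b' * ytens R (Modd kd (n:=n)) (MC kd (n:=n)) ltM b' t].
    by exists c'.
  rewrite (mulT_eta i1 he_a hbe); apply/ffunP => z; rewrite !ffunE Sg_col1.
  case cz: (col1 i1 z) => /=; last by [].
  case ap: (all (Pe mu e) (fstT z)).
    rewrite -{2}(fstTK cz) -(@key R I kd mu e n i1 d ltM ltC hltM hltC c).
    apply: eq_bigr => b' _; rewrite /c' [c' _]ffunE; reflexivity.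
  rewrite big1 // => b /andP [_ hb].
  by rewrite (ytens_zero _ _ _ _ hb) ?ap // mulr0.
- move=> u v _ _ E; apply/ffunP => t.
  have := congr1 (fun F : {ffun d.-tuple (I * 'I_n * 'I_n) -> R} => F (liftT i1 t)) E.
  by rewrite !ffunE col1_lift liftTK => ->.
- move=> w [x [c' ->] ->].
  exists [ffun t : d.-tuple (I * 'I_n) =>
     \sum_(b | admissible (Codd kd (n:=n)) b && all (Pe mu e) b)
        c' (liftT i1 b) * ytens R (Codd kd (n:=n)) (CC kd (n:=n)) ltC b t].
    exists [ffun b => c' (liftT i1 b)]; apply/ffunP => t; rewrite !ffunE.
    by apply: eq_bigr => b _; rewrite !ffunE.
  rewrite (mulT_eta i1 he_a hbe); apply/ffunP => z; rewrite !ffunE Sg_col1.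
  case cz: (col1 i1 z) => /=; last by [].
  case ap: (all (Pe mu e) (fstT z)).
    rewrite -{2}(fstTK cz) -(@key R I kd mu e n i1 d ltM ltC hltM hltC (fun b => c' (liftT i1 b))).
    apply: eq_bigr => b' _; case: ifP => [/andP [cb _]|hn']; first by rewrite fstTK.
    rewrite (@ytens_zero' R _ _ _ _ _ (S1 mu e i1)) ?mulr0 //.
      by rewrite -/(Sg mu e i1 b') Sg_col1 hn'.
    by rewrite (fstTK cz) -/(Sg mu e i1 z) Sg_col1 cz ap.
  rewrite big1 // => b /andP [_ hb].
  by rewrite (ytens_zero _ _ _ _ hb) ?ap // mulr0.
- split.
    by move=> x v _ _; apply: equiv.
  move=> p v _ hv z; rewrite ffunE; case: ifP => cz; last by rewrite eqxx.
  move=> /hv; rewrite /tpar /= count_map.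
  by [].
Qed.
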